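(* Let $d$ be sufficiently large and let $r$ be an even integer with $4\le r\le 2^{-16}d$. For $b\in\{0,1\}$, let $(f,U)\sim\mathcal{D}_b$, and let $B_0$ be the event that $|A[i]-A[j]|\le d/4$ for some distinct $i,j\in[2^{d/64}]$. Then (1) $\Pr_{\mathcal{D}_b}[B_0]\le 2^{-d/32}$ for each $b\in\{0,1\}$; (2) conditioned on $\overline{B_0}$, if $b=0$ then $f$ is Lipschitz, and if $b=1$ then $\ell_{0,U}(f,\mathrm{Lip})\ge\tfrac12$.
   Context: On $\{0,1\}^d$, $|x-y|$ is Hamming distance, $f$ is Lipschitz if $|f(x)-f(y)|\le|x-y|$ for all $x,y$, and $\ell_{0,U}(f,\mathrm{Lip})=\min_{g\text{ Lipschitz}}\Pr_{x\sim U}[f(x)\neq g(x)]$. For $x\in\{0,1\}^d$ and $t>0$, $B(x,t)=\{y:|x-y|<t\}$ (open ball). The distribution $\mathcal{D}_b$ over pairs $(f,U)$ is sampled as follows: (1) sample a list $A$ of $2^{d/64}$ points of $\{0,1\}^d$ independently and uniformly; (2) for each $i\in[2^{d/64}]$ independently choose $A'[i]$ uniformly from $\{y:|A[i]-y|=r-b\}$; (3) define $f(x)=|x-A[i]|$ if $x\in B(A[i],r/2)$ for some $i$; else $f(x)=r-|x-A'[i]|$ if $x\in B(A'[i],r/2)$ for some $i$; else $f(x)=r/2$; (4) let $U$ be the uniform distribution over the set $A\cup A'$ of all these points. *)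

(* Defs.v *)
From HB Require Import structures.
From mathcomp Require Import all_boot all_order all_algebra.
From mathcomp Require Import boolp classical_sets reals exp.
Set Implicit Arguments. Unset Strict Implicit. Unset Printing Implicit Defensive.
Import Order.TTheory GRing.Theory Num.Theory.
Local Open Scope classical_set_scope.
Local Open Scope ring_scope.

Definition cube (d : nat) := {ffun 'I_d -> bool}.

Definition ham (d : nat) (x y : cube d) : nat := #|[set k | x k != y k]|.

Definition lipschitz (R : realType) (d : nat) (g : cube d -> R) : Prop :=
  forall x y : cube d, `|g x - g y| <= (ham x y)%:R.

Definition nA (d : nat) : nat := 2 ^ (d %/ 64).

Definition plist (d : nat) := {ffun 'I_(nA d) -> cube d}.

Definition sphere (d : nat) (x : cube d) (k : nat) : {set cube d} :=
  [set y | ham x y == k].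

Definition in_omega (d r : nat) (b : bool) (w : plist d * plist d) : bool :=
  [forall i, ham (w.1 i) (w.2 i) == (r - nat_of_bool b)%N].

(* Probability of an outcome (A, A') under D_b: A[i] uniform on the cube,
   independently; A'[i] uniform on the sphere of radius r-b around A[i]. *)
Definition weightD (R : realType) (d r : nat) (b : bool)
    (w : plist d * plist d) : R :=
  if in_omega r b w then
    \prod_(i < nA d) ((2 ^ d)%:R * #|sphere (w.1 i) (r - nat_of_bool b)|%:R)^-1
  else 0.

Definition PrD (R : realType) (d r : nat) (b : bool)
    (E : pred (plist d * plist d)) : R :=
  \sum_(w | E w) @weightD R d r b w.

(* The function f defined from A, A' (step (3)); ties between several balls
   are broken by [pick], i.e. an arbitrary fixed index. Open balls B(x, r/2). *)
Definition f_of (R : realType) (d r : nat) (A A' : plist d) (x : cube d) : R :=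
  match [pick i | (ham x (A i))%:R < r%:R / 2 :> R] with
  | Some i => (ham x (A i))%:R
  | None =>
    match [pick i | (ham x (A' i))%:R < r%:R / 2 :> R] with
    | Some i => r%:R - (ham x (A' i))%:R
    | None => r%:R / 2
    end
  end.

Definition suppU (d : nat) (A A' : plist d) : {set cube d} :=
  [set x | [exists i, (x == A i) || (x == A' i)]].

Definition PrU (R : realType) (d : nat) (S : {set cube d}) (P : pred (cube d)) : R :=
  #|[set x in S | P x]|%:R / #|S|%:R.

(* ell_{0,U}(f, Lip) with U uniform on S. *)
Definition ell0 (R : realType) (d : nat) (S : {set cube d}) (f : cube d -> R) : R :=
  inf ((fun g : cube d -> R => @PrU R d S [pred x | f x != g x]) @` [set g | lipschitz g]).

Definition B0 (d : nat) (A : plist d) : bool :=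
  [exists i, exists j, (i != j) && (4 * ham (A i) (A j) <= d)%N].

(* Main.v *)
Require Import Defs.
From HB Require Import structures.
From mathcomp Require Import all_boot all_order all_algebra.
From mathcomp Require Import boolp classical_sets reals exp zify ring lra.
Import Order.TTheory GRing.Theory Num.Theory.
Set Implicit Arguments. Unset Strict Implicit.
Lemma hamE d (x y : cube d) : ham x y = #|[set k | x k != y k]|.
Proof.
rewrite /ham; apply: eq_card => k; rewrite inE.
apply/idP/idP => H.
- by move/set_mem: H.
- by apply/mem_set.
Qed.

Definition zc d : cube d := [ffun _ => false].
Definition xr d (x y : cube d) : cube d := [ffun k => x k != y k].

Lemma ham_xr d (x y : cube d) : ham x y = ham (zc d) (xr x y).
Proof. by rewrite !hamE; apply: eq_card => k; rewrite !inE /zc /xr !ffunE; case: (x k); case: (y k). Qed.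

Definition phi d (i j : 'I_(nA d)) (A : plist d) : plist d :=
  [ffun k => if k == j then xr (A i) (A j) else A k].

Lemma phiK d (i j : 'I_(nA d)) : i != j -> involutive (phi i j).
Proof.
move=> Hij A; apply/ffunP => k; rewrite !ffunE.
case: (eqVneq k j) => [-> | //]; rewrite eqxx (negbTE Hij).
by apply/ffunP => t; rewrite /xr !ffunE; case: (A i t); case: (A j t).
Qed.

Lemma card_Aj d (j : 'I_(nA d)) (P : pred (cube d)) :
  #|[set A : plist d | P (A j)]| = (#|P| * (2 ^ d) ^ (nA d).-1)%N.
Proof.
rewrite -sum1_card.
pose G (k : 'I_(nA d)) (y : cube d) : nat := if k == j then nat_of_bool (P y) else 1%N.
transitivity (\sum_(A : plist d) \prod_k G k (A k))%N.
  rewrite big_mkcond /=; apply: eq_bigr => A _.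
  rewrite (bigD1 j) //= big1; last by move=> k Hk; rewrite /G (negPf Hk).
  by rewrite /G eqxx inE muln1; case: (P (A j)).
rewrite -(bigA_distr_bigA G) (bigD1 j) //=.
transitivity ((\sum_y G j y) * (2 ^ d) ^ (nA d).-1)%N.
  have E : (nA d).-1 = #|predC1 j| by rewrite cardC1 card_ord.
  congr (_ * _)%N; rewrite E -prod_nat_const.
  apply: eq_big => // k Hk.
  by rewrite /G (negPf Hk) sum1_card card_ffun card_bool card_ord.
congr (_ * _)%N.
rewrite /G eqxx -sum1_card [in RHS]big_mkcond /=; apply: eq_bigr => y _.
by rewrite unfold_in; case: (P y).
Qed.

Lemma card_Eij d (i j : 'I_(nA d)) : i != j ->
  #|[set A : plist d | (4 * ham (A i) (A j) <= d)%N]| =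
  (#|[pred x : cube d | (4 * ham (zc d) x <= d)%N]| * (2 ^ d) ^ (nA d).-1)%N.
Proof.
move=> Hij; rewrite -(card_Aj j [pred x : cube d | (4 * ham (zc d) x <= d)%N]) -(card_preimset _ (inv_inj (phiK Hij))).
apply: eq_card => A; rewrite !inE.
have -> : phi i j A i = A i by rewrite /phi ffunE (negbTE Hij).
rewrite /phi ffunE eqxx ham_xr; congr (_ <= _)%N; congr (_ * ham _ _)%N.
by apply/ffunP => t; rewrite /xr !ffunE; case: (A i t); case: (A j t).
Qed.

Lemma wt_le d (x : cube d) : (ham (zc d) x <= d)%N.
Proof. by rewrite hamE; apply: leq_trans (max_card _) _; rewrite card_ord. Qed.

Lemma pow_wt d (x : cube d) :
  (2 ^ (d - ham (zc d) x) = \prod_k (if x k then 1 else 2))%N.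
Proof.
have -> : (d - ham (zc d) x = #|[pred k | ~~ x k]|)%N.
  have E := cardC [pred k | x k]; rewrite card_ord in E.
  have E2 : #|[pred k | ~~ x k]| = #|[predC [pred k | x k]]| by apply: eq_card.
  have W : ham (zc d) x = #|[pred k | x k]|.
    rewrite hamE; apply: eq_card => k; rewrite !inE /zc ffunE.
    by case: (x k).
  rewrite W; apply/eqP; rewrite -(eqn_add2l #|[pred k | x k]|) subnKC; last by rewrite -W wt_le.
  by rewrite E2 E.
rewrite -prod_nat_const big_mkcond /=; apply: eq_bigr => k _.
by rewrite unfold_in /=; case: (x k).
Qed.

Lemma V_bound d :
  (#|[pred x : cube d | (4 * ham (zc d) x <= d)%N]| * 2 ^ d <= 2 ^ (d %/ 4) * 3 ^ d)%N.
Proof.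
set P := [pred x : cube d | _].
rewrite -sum_nat_const.
apply: leq_trans (_ : \sum_(x in P) 2 ^ (d %/ 4) * 2 ^ (d - ham (zc d) x) <= _)%N.
  apply: leq_sum => x; rewrite inE => Hx.
  have Hq : (ham (zc d) x <= d %/ 4)%N by move: Hx; lia.
  rewrite -expnD leq_exp2l // -{1}(subnKC (wt_le x)); lia.
apply: leq_trans (_ : \sum_x 2 ^ (d %/ 4) * 2 ^ (d - ham (zc d) x) <= _)%N.
  by rewrite [X in (_ <= X)%N](bigID (mem P)) /= leq_addr.
rewrite -big_distrr /= leq_mul2l; apply/orP; right.
under eq_bigr => x _ do rewrite pow_wt.
rewrite -(bigA_distr_bigA (fun (_ : 'I_d) (b : bool) => if b then 1 else 2)%N) /=.
rewrite (eq_bigr (fun _ => 3)%N) ?prod_nat_const ?card_ord //.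
by move=> k _; rewrite big_bool.
Qed.

Lemma three16 : (3 ^ 16 <= 2 ^ 27)%N.
Proof.
have H : (3 ^ 8 <= 2 ^ 13)%N by [].
have -> : (3 ^ 16 = (3 ^ 8) ^ 2)%N by rewrite -expnM.
apply: leq_trans (_ : (2 ^ 13) ^ 2 <= _)%N.
  by rewrite leq_exp2r.
by rewrite -expnM leq_exp2l.
Qed.

Lemma V16 d :
  (#|[pred x : cube d | (4 * ham (zc d) x <= d)%N]| ^ 16 <= 2 ^ (15 * d))%N.
Proof.
set V := #|_|.
have H := V_bound d; rewrite -/V in H.
have H16 : ((V * 2 ^ d) ^ 16 <= (2 ^ (d %/ 4) * 3 ^ d) ^ 16)%N by rewrite leq_exp2r.
rewrite !expnMn -!expnM in H16.
have H1 : (2 ^ (d %/ 4 * 16) <= 2 ^ (4 * d))%N by rewrite leq_exp2l //; lia.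
have H2 : (3 ^ (d * 16) <= 2 ^ (27 * d))%N.
  case: (posnP d) => [-> // | d0].
  rewrite mulnC expnM [X in (_ <= X)%N]expnM leq_exp2r ?three16 //.
rewrite -(@leq_pmul2r (2 ^ (d * 16))) ?expn_gt0 //.
apply: leq_trans H16 _.
rewrite -expnD.
apply: leq_trans (leq_mul H1 H2) _.
by rewrite -expnD; apply: eq_leq; congr (_ ^ _)%N; lia.
Qed.

Lemma card_B0 d :
  (#|[set A : plist d | B0 A]| <=
   nA d * nA d * (#|[pred x : cube d | (4 * ham (zc d) x <= d)%N]| * (2 ^ d) ^ (nA d).-1))%N.
Proof.
pose c := (#|[pred x : cube d | (4 * ham (zc d) x <= d)%N]| * (2 ^ d) ^ (nA d).-1)%N.
pose E (p : 'I_(nA d) * 'I_(nA d)) (A : plist d) : bool := (4 * ham (A p.1) (A p.2) <= d)%N.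
apply: leq_trans (_ : \sum_(p | p.1 != p.2) #|[set A : plist d | E p A]| <= _)%N.
  rewrite -sum1_card.
  apply: leq_trans (_ : \sum_(A in [set A : plist d | B0 A]) \sum_(p | p.1 != p.2) nat_of_bool (E p A) <= _)%N.
    apply: leq_sum => A; rewrite inE => /existsP [i /existsP [j /andP [Hij Hc]]].
    rewrite (bigD1 (i, j)) //= /E /= Hc; exact: leq_addr.
  apply: leq_trans (_ : \sum_A \sum_(p | p.1 != p.2) nat_of_bool (E p A) <= _)%N.
    by rewrite [X in (_ <= X)%N](bigID (mem [set A : plist d | B0 A])) /= leq_addr.
  rewrite exchange_big /=; apply: leq_sum => p _.
  rewrite -sum1_card [X in (_ <= X)%N]big_mkcond /=; apply: eq_leq; apply: eq_bigr => A _.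
  by rewrite inE; case: (E p A).
apply: leq_trans (_ : \sum_(p | p.1 != p.2) c <= _)%N.
  apply: leq_sum => [[i j]] /= Hij.
  by rewrite (card_Eij Hij).
apply: leq_trans (_ : \sum_(p : 'I_(nA d) * 'I_(nA d)) c <= _)%N.
  by rewrite [X in (_ <= X)%N](bigID (fun p => p.1 != p.2)) /= leq_addr.
by rewrite sum_nat_const card_prod card_ord.
Qed.


Local Open Scope ring_scope.

Lemma sum_weight (R : realType) d r b (A : plist d) :
  \sum_(A' : plist d) @weightD R d r b (A, A') <= (((2 ^ d)%:R : R)^-1) ^+ (nA d).
Proof.
set k := (r - nat_of_bool b)%N.
set N : R := (2 ^ d)%:R.
have N0 : 0 < N by rewrite ltr0n expn_gt0.
pose F (i : 'I_(nA d)) (y : cube d) : R :=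
  if ham (A i) y == k then (N * (#|sphere (A i) k|)%:R)^-1 else 0.
have W : forall A', weightD R r b (A, A') = \prod_i F i (A' i).
  move=> A'; rewrite /weightD /in_omega /=; case: (boolP [forall i, _]) => H.
    by apply: eq_bigr => i _; have := forallP H i; rewrite /F => ->.
  move/forallPn: H => [i Hi]; rewrite (bigD1 i) //= /F.
  by rewrite (negbTE Hi) mul0r.
rewrite (eq_bigr _ (fun A' _ => W A')) -(bigA_distr_bigA F) /=.
have -> : N^-1 ^+ nA d = \prod_(i < nA d) N^-1 by rewrite prodr_const card_ord.
apply: ler_prod => i _.
have -> : \sum_y F i y = (#|sphere (A i) k|)%:R * (N * (#|sphere (A i) k|)%:R)^-1.
  transitivity (\sum_(y in sphere (A i) k) (N * (#|sphere (A i) k|)%:R)^-1).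
    by rewrite [RHS]big_mkcond /=; apply: eq_bigr => y _; rewrite /F inE.
  by rewrite sumr_const mulr_natl.
set s : R := (#|_|)%:R.
have s0 : 0 <= s by rewrite ler0n.
rewrite invfM mulrCA; apply/andP; split.
  by apply: mulr_ge0; [rewrite invr_ge0 ltW | rewrite divr_ge0].
rewrite -[X in _ <= X]mulr1; apply: ler_wpM2l; first by rewrite invr_ge0 ltW.
case: (eqVneq s 0) => [-> | Hs]; first by rewrite mul0r.
by rewrite divff.
Qed.

Lemma PrD_le (R : realType) d r b :
  @PrD R d r b (fun w => B0 w.1) <=
  (#|[set A : plist d | B0 A]|)%:R * (((2 ^ d)%:R : R)^-1) ^+ (nA d).
Proof.
rewrite /PrD.
have -> : \sum_(w : plist d * plist d | B0 w.1) weightD R r b w =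
          \sum_(A | B0 A) \sum_(A' : plist d) weightD R r b (A, A').
  rewrite (pair_big (@B0 d) xpredT (fun A A' => weightD R r b (A, A'))) /=.
  by apply: eq_big => [[A A'] | [A A'] _] //=; rewrite andbT.
apply: le_trans (_ : \sum_(A | B0 A) (((2 ^ d)%:R : R)^-1) ^+ (nA d) <= _).
  by apply: ler_sum => A _; apply: sum_weight.
rewrite (eq_bigl (mem [set A : plist d | B0 A])); last by move=> A; rewrite !inE.
by rewrite sumr_const mulr_natl.
Qed.


Lemma final_nat d V : (V ^ 16 <= 2 ^ (15 * d))%N ->
  ((nA d * nA d * V) ^ 32 * 2 ^ d <= (2 ^ d) ^ 32)%N.
Proof.
move=> HV.
rewrite !expnMn /nA -!expnM -expnD.
have H1 : (2 ^ (d %/ 64 * 32 + d %/ 64 * 32) <= 2 ^ d)%N by rewrite leq_exp2l //; lia.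
have H2 : (V ^ 32 <= 2 ^ (30 * d))%N.
  have -> : (V ^ 32 = (V ^ 16) ^ 2)%N by rewrite -expnM.
  apply: leq_trans (_ : (2 ^ (15 * d)) ^ 2 <= _)%N; first by rewrite leq_exp2r.
  by rewrite -expnM; apply: eq_leq; congr (_ ^ _)%N; lia.
apply: leq_trans (_ : 2 ^ d * 2 ^ (30 * d) * 2 ^ d <= _)%N.
  by rewrite leq_mul2r leq_mul ?orbT.
by rewrite -!expnD; apply: eq_leq; congr (_ ^ _)%N; lia.
Qed.

Lemma final_real (R : realType) d (n V : nat) : (0 < n)%N ->
  ((n * n * V) ^ 32 * 2 ^ d <= (2 ^ d) ^ 32)%N ->
  ((n * n * (V * (2 ^ d) ^ n.-1))%:R : R) * (((2 ^ d)%:R : R)^-1) ^+ n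
   <= (2 : R) `^ (- (d%:R / 32)).
Proof.
case: n => [//|m] _ H /=.
set N : R := (2 ^ d)%:R.
have N0 : 0 < N by rewrite ltr0n expn_gt0.
set C : R := (m.+1 * m.+1 * V)%:R.
have -> : ((m.+1 * m.+1 * (V * (2 ^ d) ^ m))%:R : R) * N^-1 ^+ m.+1 = C / N.
  rewrite mulnA natrM natrX -/C -/N exprVn.
  rewrite exprS; set P := N ^+ m; have P0 : P != 0 by rewrite expf_neq0 ?gt_eqF.
  by field; rewrite P0 gt_eqF.
set u : R := 2 `^ (d%:R / 32).
have u0 : 0 < u by rewrite powR_gt0.
have uN : u ^+ 32 = N.
  by rewrite -powR_mulrn ?ltW // -powRrM mulfVK ?pnatr_eq0 // powR_mulrn // /N natrX.
rewrite powRN -/u.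
have C0 : 0 <= C by rewrite ler0n.
rewrite -(ler_pXn2r (n:=32)) //; last 2 first.
- by rewrite nnegrE divr_ge0 // ltW.
- by rewrite nnegrE invr_ge0 ltW.
rewrite exprVn uN expr_div_n ler_pdivrMr ?exprn_gt0 //.
rewrite mulrC ler_pdivlMr // /C /N -!natrX -natrM ler_nat.
exact: H.
Qed.


Lemma ham_sym d (x y : cube d) : ham x y = ham y x.
Proof. by rewrite !hamE; apply: eq_card => k; rewrite !inE eq_sym. Qed.

Lemma ham_xx d (x : cube d) : ham x x = 0%N.
Proof. rewrite hamE; apply/eqP; rewrite cards_eq0; apply/eqP; apply/setP => k; by rewrite !inE eqxx. Qed.

Lemma ham_eq0 d (x y : cube d) : ham x y = 0%N -> x = y.
Proof.
rewrite hamE => /eqP; rewrite cards_eq0 => /eqP H; apply/ffunP => k.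
apply/eqP; apply: contraT => Hk.
have : k \in [set k | x k != y k] by rewrite inE.
by rewrite H inE.
Qed.

Lemma ham_tri d (x y z : cube d) : (ham x z <= ham x y + ham y z)%N.
Proof.
rewrite !hamE; apply: leq_trans (leq_card_setU _ _).
apply: subset_leq_card; apply/fintype.subsetP => k; rewrite !inE.
by case: (x k); case: (y k); case: (z k).
Qed.

Lemma lt_half (R : realType) (n r : nat) : ((n%:R : R) < r%:R / 2) = (2 * n < r)%N.
Proof. by rewrite ltr_pdivlMr // -natrM ltr_nat mulnC. Qed.

Lemma f_spec (R : realType) d r (A A' : plist d) x :
  [\/ exists i, (2 * ham x (A i) < r)%N /\ @f_of R d r A A' x = (ham x (A i))%:R,
      (forall i, r <= 2 * ham x (A i))%N /\
        exists i, (2 * ham x (A' i) < r)%N /\ @f_of R d r A A' x = r%:R - (ham x (A' i))%:R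
    | [/\ (forall i, r <= 2 * ham x (A i))%N, (forall i, r <= 2 * ham x (A' i))%N &
         @f_of R d r A A' x = r%:R / 2]].
Proof.
rewrite /f_of; case: pickP => [i Hi | H].
  by apply: Or31; exists i; rewrite -(lt_half R).
have HA : forall i, (r <= 2 * ham x (A i))%N.
  by move=> i; have := H i; rewrite lt_half => /negbT; rewrite -leqNgt.
case: pickP => [i Hi | H'].
  by apply: Or32; split => //; exists i; rewrite -(lt_half R).
apply: Or33; split => // i.
by have := H' i; rewrite lt_half => /negbT; rewrite -leqNgt.
Qed.

Lemma tri_r (R : realType) d (x y z : cube d) :
  ((ham x z)%:R : R) <= (ham x y)%:R + (ham y z)%:R.
Proof. by rewrite -natrD ler_nat ham_tri. Qed.

Lemma lip_b0 (R : realType) d r (A A' : plist d)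
  (Hfar : forall i j, i != j -> (16 * r < ham (A i) (A j))%N)
  (HO : forall i, ham (A i) (A' i) = r) (Hr : (0 < r)%N) :
  @lipschitz R d (@f_of R d r A A').
Proof.
set f := @f_of R d r A A'.
have P1 : forall x i, r%:R - (ham x (A' i))%:R <= f x.
  move=> x i; rewrite /f; case: (f_spec R r A A' x).
  - move=> [j [Hj ->]]; rewrite lerBlDr -natrD ler_nat.
    case: (eqVneq i j) => [<- | Hij].
      by have := ham_tri (A i) x (A' i); rewrite HO ham_sym addnC.
    have := Hfar _ _ Hij; have := ham_tri (A' i) x (A j);
    have := ham_sym (A' i) x; have := HO i;
    have := ham_tri (A i) (A' i) (A j). lia.
  - move=> [HA [j [Hj ->]]].
    case: (eqVneq i j) => [<- | Hij]; first by [].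
    apply: le_trans (_ : 0 <= _); last first.
      by rewrite subr_ge0 ler_nat; lia.
    rewrite subr_le0 ler_nat.
    have := Hfar _ _ Hij; have := ham_tri (A i) x (A j);
    have := ham_tri x (A' j) (A j); have := HO j; have := ham_sym (A' j) (A j);
    have := ham_tri (A i) (A' i) x; have := ham_sym x (A' i); have := HO i.
    have := ham_sym x (A i). lia.
  - move=> [HA HA' ->].
    have H : (r%:R : R) <= 2 * (ham x (A' i))%:R by rewrite -natrM ler_nat.
    lra.
have P2 : forall x, (f x <= r%:R / 2 /\ forall i, f x <= (ham x (A i))%:R) \/
                    exists i, f x = r%:R - (ham x (A' i))%:R.
  move=> x; rewrite /f; case: (f_spec R r A A' x).
  - move=> [j [Hj ->]]; left; split.
      by rewrite ler_pdivlMr // -natrM ler_nat; lia.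
    move=> i; rewrite ler_nat; case: (eqVneq i j) => [-> // | Hij].
    have := Hfar _ _ Hij; have := ham_tri (A i) x (A j);
    have := ham_sym x (A i). lia.
  - by move=> [_ [j [_ ->]]]; right; exists j.
  - move=> [HA HA' ->]; left; split => // i.
    by rewrite ler_pdivrMr // -natrM ler_nat mulnC.
have P3 : forall y, r%:R / 2 <= f y \/ exists i, (ham y (A i))%:R <= f y.
  move=> y; rewrite /f; case: (f_spec R r A A' y).
  - by move=> [j [_ ->]]; right; exists j.
  - move=> [_ [j [Hj ->]]]; left.
    have H : 2 * (ham y (A' j))%:R <= (r%:R : R) by rewrite -natrM ler_nat; lia.
    lra.
  - by move=> [_ _ ->]; left.
have L : forall x y, f x - f y <= (ham x y)%:R.
  move=> x y; case: (P2 x) => [[Hx1 Hx2] | [i Hi]].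
    case: (P3 y) => [Hy | [i Hi]]; first by have := ler0n R (ham x y); lra.
    have := Hx2 i; have := tri_r R x y (A i). lra.
  have := P1 y i; have := tri_r R y x (A' i); rewrite (ham_sym y x). lra.
move=> x y; rewrite ler_norml; apply/andP; split; last exact: L.
by rewrite lerNl opprB ham_sym L.
Qed.

Lemma ell_b1 (R : realType) d r (A A' : plist d)
  (Hfar : forall i j, i != j -> (16 * r < ham (A i) (A j))%N)
  (HO : forall i, ham (A i) (A' i) = (r - 1)%N) (Hr : (4 <= r)%N) :
  1 / 2 <= @ell0 R d (suppU A A') (@f_of R d r A A').
Proof.
set f := @f_of R d r A A'.
have fA : forall i, f (A i) = 0.
  move=> i; rewrite /f; case: (f_spec R r A A' (A i)).
  - move=> [j [Hj ->]]; case: (eqVneq i j) => [<- | Hij]; first by rewrite ham_xx.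
    by have := Hfar _ _ Hij; lia.
  - by move=> [HA _]; have := HA i; rewrite ham_xx; lia.
  - by move=> [HA _ _]; have := HA i; rewrite ham_xx; lia.
have fA' : forall i, f (A' i) = r%:R.
  move=> i; rewrite /f; case: (f_spec R r A A' (A' i)).
  - move=> [j [Hj _]]; case: (eqVneq i j) => [Hij | Hij].
      by move: Hj; rewrite -Hij ham_sym HO; lia.
    have := Hfar _ _ Hij; have := ham_tri (A i) (A' i) (A j); have := HO i. lia.
  - move=> [_ [j [Hj ->]]]; case: (eqVneq i j) => [<- | Hij].
      by rewrite ham_xx subr0.
    have := Hfar _ _ Hij; have := ham_tri (A i) (A' i) (A j); have := HO i;
    have := ham_tri (A' i) (A' j) (A j); have := HO j; have := ham_sym (A j) (A' j).
    lia.
  - by move=> [_ HA _]; have := HA i; rewrite ham_xx; lia.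
have key : forall i j, i != j -> forall u v, (u == A i) || (u == A' i) ->
    (v == A j) || (v == A' j) -> u != v.
  move=> i j Hij u v Hu Hv; apply/eqP => Euv; subst v.
  have := Hfar _ _ Hij; have := HO i; have := HO j.
  have := ham_tri (A i) (A' i) (A j); have := ham_tri (A i) (A' j) (A j);
  have := ham_tri (A' i) (A' j) (A j); have := ham_sym (A j) (A' j).
  case/orP: Hu => /eqP Hu; case/orP: Hv => /eqP Hv.
  - by rewrite -Hu Hv ham_xx.
  - by rewrite -Hu Hv ham_xx; lia.
  - by rewrite -Hu Hv ham_xx; lia.
  - by rewrite -Hu Hv ham_xx; lia.
have i0 : 'I_(nA d) by exists 0%N; rewrite /nA expn_gt0.
apply: lb_le_inf.
  exists (PrU R (suppU A A') [pred x | f x != 0]); exists (fun=> 0) => //.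
  by move=> x y /=; rewrite subr0 normr0 ler0n.
move=> _ [g Hg <-].
set S := suppU A A'.
set M := [set x in S | [pred x | f x != g x] x].
pose c i := if f (A i) != g (A i) then A i else A' i.
have cS : forall i, c i \in S.
  by move=> i; rewrite /S /suppU inE; apply/existsP; exists i; rewrite /c; case: ifP; rewrite eqxx ?orbT.
have cM : forall i, c i \in M.
  move=> i; rewrite /M inE cS /= /c; case: ifP => // /negbFE /eqP H.
  apply/eqP => H'; have := Hg (A i) (A' i).
  rewrite -H -H' fA fA' sub0r normrN ger0_norm // HO natrB; last lia.
  have : (0 : R) < 1 by []. lra.
have cinj : injective c.
  move=> i j Ec; apply/eqP; apply: contraT => Hij.
  have Hu : (c i == A i) || (c i == A' i) by rewrite /c; case: ifP; rewrite eqxx ?orbT.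
  have Hv : (c j == A j) || (c j == A' j) by rewrite /c; case: ifP; rewrite eqxx ?orbT.
  by have := key _ _ Hij _ _ Hu Hv; rewrite Ec eqxx.
have HM : (nA d <= #|M|)%N.
  rewrite -{1}(card_ord (nA d)) -cardsT -(card_imset _ cinj).
  apply: subset_leq_card.
  by apply/fintype.subsetP => x /imsetP [i _ ->].
have HS : (#|S| <= 2 * nA d)%N.
  apply: leq_trans (_ : #|[set A i | i : 'I_(nA d)] :|: [set A' i | i : 'I_(nA d)]| <= _)%N.
    apply: subset_leq_card; apply/fintype.subsetP => x.
    rewrite /S /suppU inE => /existsP [i /orP [] /eqP ->]; rewrite inE; apply/orP.
      by left; apply: imset_f.
    by right; apply: imset_f.
  apply: leq_trans (leq_card_setU _ _) _.
  have := leq_imset_card A 'I_(nA d); have := leq_imset_card A' 'I_(nA d).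
  rewrite card_ord => H1 H2; rewrite mul2n -addnn; exact: leq_add.
have S0 : (0 < #|S|)%N.
  by apply/card_gt0P; exists (c i0).
rewrite /PrU -/M ler_pdivlMr ?ltr0n //.
have : (#|S|%:R : R) <= 2 * (nA d)%:R by rewrite -natrM ler_nat.
have : ((nA d)%:R : R) <= #|M|%:R by rewrite ler_nat.
lra.
Qed.


Theorem lemma4p5 (R : realType) :
  exists d0 : nat, forall d r : nat,
    (d0 <= d)%N -> ~~ odd r -> (4 <= r)%N -> (2 ^ 16 * r <= d)%N ->
    forall b : bool,
      @PrD R d r b (fun w => B0 w.1) <= (2 : R) `^ (- (d%:R / 32))
      /\
      (forall A A' : plist d, @in_omega d r b (A, A') -> ~~ B0 A ->
        (b = false -> @lipschitz R d (@f_of R d r A A')) /\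
        (b = true -> 1 / 2 <= @ell0 R d (suppU A A') (@f_of R d r A A'))).
Proof.
exists 0%N => d r _ Hev Hr4 Hd b; split.
  apply: le_trans (PrD_le R d r b) _.
  set V := #|[pred x : cube d | (4 * ham (zc d) x <= d)%N]|.
  apply: le_trans (final_real R (n := nA d) (V := V) _ _); last first.
  - exact: final_nat (V16 d).
  - by rewrite /nA expn_gt0.
  apply: ler_wpM2r; first by rewrite exprn_ge0 // invr_ge0 ler0n.
  by rewrite ler_nat; exact: card_B0.
move=> A A' Hom HB.
have H64 : (64 * r <= d)%N.
  apply: leq_trans Hd; rewrite leq_mul2r; apply/orP; right.
  by apply: (@leq_trans (2 ^ 6)); rewrite // leq_exp2l.
clear Hd.
have Hfar : forall i j, i != j -> (16 * r < ham (A i) (A j))%N.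
  move=> i j Hij; case: (leqP (4 * ham (A i) (A j)) d) => H; last lia.
  exfalso; move/negP: HB; apply; apply/existsP; exists i; apply/existsP; exists j.
  by rewrite Hij H.
have HO : forall i, ham (A i) (A' i) = (r - nat_of_bool b)%N.
  by move=> i; apply/eqP; exact: (forallP Hom i).
split => Hb; subst b.
  apply: lip_b0 => // [i|]; first by rewrite HO subn0.
  lia.
exact: ell_b1.
Qed.
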